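(* Let $d \geq 0$ be an integer and $t>0$. Let $M$ be a symmetric, unimodal, integer-valued random variable. Then $$\mathbb{E}\left[\log\frac{I_M(t)}{I_{M-d}(t)}\right] \leq \frac{d+d^2}{2t}.$$
   Context: $I_n(t)$ denotes the modified Bessel function of the first kind of integer order $n$ evaluated at $t$ (so $I_{-n}=I_n$). An integer-valued random variable $M$ is symmetric if $\mathbb{P}(M=m)=\mathbb{P}(M=-m)$ for all $m$, and (for symmetric laws) unimodal means that $m \mapsto \mathbb{P}(M=m)$ is non-increasing in $|m|$. *)

(* Defs.v *)
From Stdlib Require Import Reals Lra Lia ZArith.
From Coquelicot Require Import Coquelicot.
Open Scope R_scope.

Definition besselI (n : Z) (t : R) : R :=
  Series (fun k : nat =>
    (t / 2) ^ (2 * k + Z.abs_nat n) /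
    (INR (fact k) * INR (fact (k + Z.abs_nat n)))).

(** Used to express sums over the integers (absolute convergence is assumed
    where the value matters, so the grouping is immaterial). *)
Definition zterm (f : Z -> R) (n : nat) : R :=
  match n with
  | O => f 0%Z
  | S _ => f (Z.of_nat n) + f (- Z.of_nat n)%Z
  end.

Definition is_pmf (p : Z -> R) : Prop :=
  (forall m, 0 <= p m) /\ is_series (zterm p) 1.

Definition symmetric_pmf (p : Z -> R) : Prop :=
  forall m, p m = p (- m)%Z.

Definition unimodal_sym_pmf (p : Z -> R) : Prop :=
  forall m n, (Z.abs m <= Z.abs n)%Z -> p n <= p m.

Definition integrable_pmf (p : Z -> R) (g : Z -> R) : Prop :=
  ex_series (zterm (fun m => Rabs (p m * g m))).

Definition expect_pmf (p : Z -> R) (g : Z -> R) : R :=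
  Series (zterm (fun m => p m * g m)).

(* Main.v *)
From Stdlib Require Import Reals Lra Lia ZArith.
From Coquelicot Require Import Coquelicot.
Require Import Defs.
From mathcomp Require ssreflect ssrfun ssrbool eqtype ssrnat seq fintype bigop binomial zify.
Open Scope R_scope.

Fixpoint natsum (g : nat -> nat) (n : nat) : nat :=
  match n with O => g O | S n' => (natsum g n' + g n)%nat end.

Module MC.
Import ssreflect ssrfun ssrbool eqtype ssrnat seq fintype bigop binomial zify.
Local Open Scope nat_scope.

Lemma natsum_big (g : nat -> nat) n : \sum_(k < n.+1) g k = natsum g n.
Proof.
elim: n => [|n IH]; first by rewrite big_ord_recl big_ord0 addn0.
by rewrite big_ord_recr /= IH.
Qed.

Lemma vdm a b m :
  \sum_(k < m.+1) 'C(m, k) * 'C(m + a + b, k + a) = 'C(m + (m + a + b), m + a).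
Proof.
have := Vandermonde m (m + a + b) (m + b).
have -> : 'C(m + (m + a + b), m + b) = 'C(m + (m + a + b), m + a).
  rewrite -(bin_sub (n:=m + (m+a+b)) (m:=m+a)); last by lia.
  congr binomial. lia.
move=> <-.
rewrite (big_ord_widen (m + b).+1 (fun k => 'C(m, k) * 'C(m + a + b, k + a))); last by lia.
rewrite big_mkcond /=; apply: eq_bigr => i _.
have := ltn_ord i => H.
case: ifP => Hi.
  rewrite -(bin_sub (n:=m+a+b) (m:=i+a)); last by lia.
  congr (_ * binomial _ _). lia.
rewrite bin_small ?mul0n //. lia.
Qed.

Lemma vdm_natsum a b m :
  natsum (fun k => 'C(m, k) * 'C(m + a + b, k + a)) m = 'C(m + (m + a + b), m + a).
Proof. by rewrite -natsum_big vdm. Qed.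

Lemma fact_eq n : Factorial.fact n = n`!.
Proof. elim: n => [|n IH] //=. by rewrite factS IH. Qed.

Lemma bin_fact' n k : k <= n -> binomial n k * (Factorial.fact k * Factorial.fact (n - k)) = Factorial.fact n.
Proof. by rewrite !fact_eq; apply: bin_fact. Qed.
Lemma vdm_std a b m :
  natsum (fun k => Nat.mul (binomial m k) (binomial (Nat.add (Nat.add m a) b) (Nat.add k a))) m
  = binomial (Nat.add m (Nat.add (Nat.add m a) b)) (Nat.add m a).
Proof. exact (vdm_natsum a b m). Qed.
Lemma bin_std n k : Peano.le k n ->
  Nat.mul (binomial n k) (Nat.mul (Factorial.fact k) (Factorial.fact (Nat.sub n k))) = Factorial.fact n.
Proof. move/leP => H. exact: bin_fact' H. Qed.
End MC.

Definition u (a : nat) (t : R) (k : nat) : R :=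
  (t / 2) ^ (2 * k + a) / (INR (fact k) * INR (fact (k + a))).
Definition J (a : nat) (t : R) : R := Series (u a t).

Lemma u_pos a t k : 0 < t -> 0 < u a t k.
Proof.
intros Ht. unfold u. apply Rdiv_lt_0_compat.
- apply pow_lt. lra.
- apply Rmult_lt_0_compat; apply INR_fact_lt_0.
Qed.

Lemma ex_exp_series x : ex_series (fun n => x ^ n / INR (fact n)).
Proof.
exists (exp x). generalize (is_exp_Reals x). unfold is_pseries.
apply is_series_ext. intros n. rewrite pow_n_pow. reflexivity.
Qed.

Lemma ex_u a t : 0 < t -> ex_series (u a t).
Proof.
intros Ht.
apply (ex_series_le (V:=R_CompleteNormedModule) _ (fun k => (t/2)^a * (((t/2)^2)^k / INR (fact k)))).
- intros k. change (Rabs (u a t k) <= (t/2)^a * (((t/2)^2)^k / INR (fact k))).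
  rewrite Rabs_pos_eq by (left; apply u_pos; exact Ht).
  unfold u. rewrite <- pow_mult, (Nat.mul_comm 2 k), pow_add.
  assert (H1 : 0 < INR (fact k)) by apply INR_fact_lt_0.
  assert (H2 : 1 <= INR (fact (k + a))).
  { apply (le_INR 1). apply lt_O_fact. }
  assert (H3 : 0 < (t/2)^(k*2)) by (apply pow_lt; lra).
  assert (H4 : 0 < (t/2)^a) by (apply pow_lt; lra).
  set (q := t/2) in *.
  replace (q ^ a * (q ^ (k * 2) / INR (fact k))) with (q^(k*2) * q^a * / (INR (fact k) * 1)) by (field; lra).
  unfold Rdiv. apply Rmult_le_compat_l. { left; apply Rmult_lt_0_compat; lra. }
  apply Rinv_le_contravar. { lra. } apply Rmult_le_compat_l; lra.
- apply (ex_series_scal_l (V:=R_NormedModule)). apply ex_exp_series.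
Qed.

Lemma Series_nonneg (a : nat -> R) : (forall n, 0 <= a n) -> ex_series a -> 0 <= Series a.
Proof.
intros H He.
assert (H0 : Series (fun _ => 0) = 0).
{ rewrite (Series_ext (fun _ => 0) (fun n => 0 * 0)) by (intros; ring).
  rewrite Series_scal_l. ring. }
rewrite <- H0. apply Series_le; [intros n; split; [lra|apply H] | exact He].
Qed.

Lemma J_pos a t : 0 < t -> 0 < J a t.
Proof.
intros Ht. unfold J. rewrite Series_incr_1 by (apply ex_u; exact Ht).
assert (0 < u a t 0) by (apply u_pos; exact Ht).
assert (0 <= Series (fun k => u a t (S k))).
{ apply Series_nonneg. intros n; left; apply u_pos; exact Ht.
  apply (proj1 (ex_series_incr_1 (u a t))). apply ex_u; exact Ht. }
lra.
Qed.

Lemma u_rec0 v t : 0 < t -> u v t 0 = 2 * (INR v + 1) / t * u (v+1) t 0.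
Proof.
intros Ht. unfold u. simpl (2*0)%nat. rewrite !Nat.add_0_l.
replace (v+1)%nat with (S v) by lia.
rewrite fact_simpl, mult_INR, S_INR. cbn [pow].
assert (0 < INR (fact v)) by apply INR_fact_lt_0.
assert (0 <= INR v) by apply pos_INR.
replace (fact 0) with 1%nat by reflexivity. simpl INR. field. repeat split; lra.
Qed.

Lemma u_recS v t k : 0 < t ->
  u v t (S k) - u (v+2) t k = 2 * (INR v + 1) / t * u (v+1) t (S k).
Proof.
intros Ht. unfold u.
replace (2 * S k + v)%nat with (S (S (2*k+v))) by lia.
replace (2 * k + (v + 2))%nat with (S (S (2*k+v))) by lia.
replace (2 * S k + (v + 1))%nat with (S (S (S (2*k+v)))) by lia.
replace (S k + v)%nat with (S (k+v)) by lia.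
replace (k + (v+2))%nat with (S (S (k+v))) by lia.
replace (S k + (v+1))%nat with (S (S (k+v))) by lia.
set (e := (2*k+v)%nat). set (g := (k+v)%nat).
assert (Hg : INR g = INR k + INR v) by (unfold g; apply plus_INR).
rewrite !fact_simpl, !mult_INR, !S_INR. cbn [pow].
assert (0 < INR (fact g)) by apply INR_fact_lt_0.
assert (0 < INR (fact k)) by apply INR_fact_lt_0.
assert (0 <= INR k) by apply pos_INR.
assert (0 <= INR v) by apply pos_INR.
rewrite Hg. field. repeat split; lra.
Qed.

Lemma J_rec v t : 0 < t -> J v t - J (v+2) t = 2 * (INR v + 1) / t * J (v+1) t.
Proof.
intros Ht. unfold J.
rewrite (Series_incr_1 (u v t)) by (apply ex_u; exact Ht).
rewrite (Series_incr_1 (u (v+1) t)) by (apply ex_u; exact Ht).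
assert (E : Series (fun k => u v t (S k)) - Series (u (v+2) t)
   = Series (fun k => 2 * (INR v + 1) / t * u (v+1) t (S k))).
{ rewrite <- Series_minus.
  - apply Series_ext. intros k. apply u_recS. exact Ht.
  - apply (proj1 (ex_series_incr_1 (u v t))). apply ex_u; exact Ht.
  - apply ex_u; exact Ht. }
rewrite Series_scal_l in E. rewrite (u_rec0 v t Ht). lra.
Qed.

Notation F n := (INR (fact n)).

Lemma INR_natsum g n : INR (natsum g n) = sum_f_R0 (fun k => INR (g k)) n.
Proof. induction n as [|n IH]; simpl natsum; simpl sum_f_R0; [reflexivity|]. rewrite plus_INR, IH. reflexivity. Qed.

Lemma INR_bin n k : (k <= n)%nat -> INR (binomial.binomial n k) = F n / (F k * F (n - k)).
Proof.
intros H. rewrite <- (MC.bin_std n k H). rewrite !mult_INR.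
assert (0 < F k) by apply INR_fact_lt_0. assert (0 < F (n-k)) by apply INR_fact_lt_0.
field. lra.
Qed.

Definition Sab (a b m : nat) : R :=
  sum_f_R0 (fun k => / (F k * F (m-k) * F (k+a) * F (m-k+b))) m.

Lemma Sab_closed a b m :
  Sab a b m = F (2*m+a+b) / (F m * F (m+a+b) * F (m+a) * F (m+b)).
Proof.
assert (Hm : 0 < F m) by apply INR_fact_lt_0.
assert (HN : 0 < F (m+a+b)) by apply INR_fact_lt_0.
assert (H1 : 0 < F (m+a)) by apply INR_fact_lt_0.
assert (H2 : 0 < F (m+b)) by apply INR_fact_lt_0.
assert (E := f_equal INR (MC.vdm_std a b m)).
rewrite INR_natsum in E.
rewrite INR_bin in E by lia.
replace (m + (m + a + b) - (m + a))%nat with (m+b)%nat in E by lia.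
replace (m + (m + a + b))%nat with (2*m+a+b)%nat in E by lia.
assert (E2 : sum_f_R0 (fun k => INR (binomial.binomial m k * binomial.binomial (m + a + b) (k + a))) m
   = (F m * F (m+a+b)) * Sab a b m).
{ unfold Sab. rewrite scal_sum. apply sum_eq. intros k Hk.
  rewrite mult_INR, !INR_bin by lia.
  replace (m + a + b - (k + a))%nat with (m - k + b)%nat by lia.
  assert (0 < F k) by apply INR_fact_lt_0. assert (0 < F (m-k)) by apply INR_fact_lt_0.
  assert (0 < F (k+a)) by apply INR_fact_lt_0. assert (0 < F (m-k+b)) by apply INR_fact_lt_0.
  field. repeat split; lra. }
rewrite E2 in E. 
apply (Rmult_eq_reg_l (F m * F (m+a+b))). 2: { apply Rgt_not_eq. apply Rmult_lt_0_compat; lra. }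
rewrite E. field. repeat split; lra.
Qed.

Lemma prod_series a b t : 0 < t ->
  is_series (fun m => (t/2)^(2*m+a+b) * Sab a b m) (J a t * J b t).
Proof.
intros Ht.
assert (P := is_series_mult_pos (u a t) (u b t) (J a t) (J b t)
   (Series_correct _ (ex_u a t Ht)) (Series_correct _ (ex_u b t Ht))
   (fun n => Rlt_le _ _ (u_pos a t n Ht)) (fun n => Rlt_le _ _ (u_pos b t n Ht))).
revert P. apply is_series_ext. intros m.
unfold Sab. rewrite scal_sum. apply sum_eq. intros k Hk.
unfold u. replace (2 * m + a + b)%nat with ((2*k+a) + (2*(m-k)+b))%nat by lia.
rewrite (pow_add _ (2*k+a) (2*(m-k)+b)).
assert (0 < F k) by apply INR_fact_lt_0. assert (0 < F (m-k)) by apply INR_fact_lt_0.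
assert (0 < F (k+a)) by apply INR_fact_lt_0. assert (0 < F (m-k+b)) by apply INR_fact_lt_0.
field. repeat split; lra.
Qed.

Lemma fact_sq g : F (g+1) * F (g+1) <= F g * F (g+2).
Proof.
replace (g+1)%nat with (S g) by lia. replace (g+2)%nat with (S (S g)) by lia.
rewrite !fact_simpl, !mult_INR, !S_INR.
assert (0 < F g) by apply INR_fact_lt_0. assert (0 <= INR g) by apply pos_INR.
assert (0 <= F g * F g) by nra. nra.
Qed.

Lemma cmp_aux P X D A B C : 0 <= P -> 0 <= X -> 0 < D -> 0 < C -> C * C <= A * B ->
  P * (X / (D * A * B)) <= P * (X / (D * C * C)).
Proof.
intros HP HX HD HC HAB.
apply Rmult_le_compat_l; [exact HP|]. unfold Rdiv. apply Rmult_le_compat_l; [exact HX|].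
apply Rinv_le_contravar. { apply Rmult_lt_0_compat; [|exact HC]. apply Rmult_lt_0_compat; assumption. }
rewrite !Rmult_assoc. apply Rmult_le_compat_l; [lra|]. exact HAB.
Qed.

Lemma Sab_pos a b m : 0 < Sab a b m.
Proof.
rewrite Sab_closed. apply Rdiv_lt_0_compat. apply INR_fact_lt_0.
repeat apply Rmult_lt_0_compat; apply INR_fact_lt_0.
Qed.

Lemma turan v t : 0 < t -> J v t * J (v+2) t <= J (v+1) t * J (v+1) t.
Proof.
intros Ht.
rewrite <- (is_series_unique _ _ (prod_series v (v+2) t Ht)).
rewrite <- (is_series_unique _ _ (prod_series (v+1) (v+1) t Ht)).
apply Series_le. 2: { eexists. apply prod_series. exact Ht. }
intros m. split.
{ apply Rmult_le_pos. apply pow_le; lra. left; apply Sab_pos. }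
rewrite !Sab_closed.
replace (2*m+v+(v+2))%nat with (2*m+(v+1)+(v+1))%nat by lia.
replace (m+v+(v+2))%nat with (m+(v+1)+(v+1))%nat by lia.
replace (m+(v+2))%nat with ((m+v)+2)%nat by lia.
replace (m+(v+1))%nat with ((m+v)+1)%nat by lia.
apply cmp_aux.
- apply pow_le; lra.
- apply pos_INR.
- apply Rmult_lt_0_compat; apply INR_fact_lt_0.
- apply INR_fact_lt_0.
- apply fact_sq.
Qed.

Lemma J0_ge_J1 t : 0 < t -> J 1 t * J 1 t <= J 0 t * J 0 t.
Proof.
intros Ht.
rewrite <- (is_series_unique _ _ (prod_series 1 1 t Ht)).
assert (H0 := prod_series 0 0 t Ht).
rewrite <- (is_series_unique _ _ H0).
assert (Hex : ex_series (fun m => (t/2)^(2*m+0+0) * Sab 0 0 m)) by (eexists; exact H0).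
rewrite (Series_incr_1 (fun m => (t/2)^(2*m+0+0) * Sab 0 0 m)) by exact Hex.
assert (0 <= (t/2)^(2*0+0+0) * Sab 0 0 0).
{ apply Rmult_le_pos. apply pow_le; lra. left; apply Sab_pos. }
cut (Series (fun m => (t/2)^(2*m+1+1) * Sab 1 1 m) <= Series (fun k => (t/2)^(2*(S k)+0+0) * Sab 0 0 (S k))).
{ lra. }
apply Series_le. 2: { exact (proj1 (ex_series_incr_1 (fun m => (t/2)^(2*m+0+0) * Sab 0 0 m)) Hex). }
intros m. split.
{ apply Rmult_le_pos. apply pow_le; lra. left; apply Sab_pos. }
rewrite !Sab_closed.
replace (2*S m+0+0)%nat with (2*m+1+1)%nat by lia.
replace (2*S m+0)%nat with (2*m+1+1)%nat by lia.
replace (S m+0+0)%nat with (m+1)%nat by lia.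
replace (S m+0)%nat with (m+1)%nat by lia.
replace (S m) with (m+1)%nat by lia.
replace (m+1+1)%nat with (m+2)%nat by lia.
replace (F (m+1) * F (m+1) * F (m+1) * F (m+1)) with (F (m+1) * F (m+1) * F (m+1) * F (m+1)) by reflexivity.
apply Rmult_le_compat_l. { apply pow_le; lra. }
unfold Rdiv. apply Rmult_le_compat_l. { apply pos_INR. }
apply Rinv_le_contravar.
{ repeat apply Rmult_lt_0_compat; apply INR_fact_lt_0. }
assert (H1 := fact_sq m). assert (0 < F (m+1)) by apply INR_fact_lt_0.
assert (0 < F (m+1) * F (m+1)) by nra.
nra.
Qed.

Lemma F1 j t : 0 < t ->
  t * (J j t * J j t) - 2 * (INR j + 1) * (J j t * J (j+1) t) - t * (J (j+1) t * J (j+1) t) <= 0.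
Proof.
intros Ht. assert (R := J_rec j t Ht). assert (T := turan j t Ht).
assert (E : 2 * (INR j + 1) * J (j+1) t = t * (J j t - J (j+2) t)).
{ rewrite R. field. lra. }
replace (2 * (INR j + 1) * (J j t * J (j + 1) t)) with (J j t * (2 * (INR j + 1) * J (j+1) t)) by ring.
rewrite E. nra.
Qed.

Lemma F2 j t : 0 < t ->
  0 <= t * (J j t * J j t) - 2 * INR j * (J j t * J (j+1) t) - t * (J (j+1) t * J (j+1) t).
Proof.
intros Ht. destruct j as [|i].
- simpl INR. assert (H := J0_ge_J1 t Ht). replace (0+1)%nat with 1%nat by reflexivity. nra.
- assert (R := J_rec i t Ht). assert (T := turan i t Ht).
  replace (S i) with (i+1)%nat by lia. replace (i+1+1)%nat with (i+2)%nat by lia.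
  rewrite plus_INR. simpl (INR 1).
  assert (E : 2 * (INR i + 1) * J (i+1) t = t * (J i t - J (i+2) t)).
  { rewrite R. field. lra. }
  replace (2 * (INR i + 1) * (J (i+1) t * J (i + 2) t)) with (J (i+2) t * (2 * (INR i + 1) * J (i+1) t)) by ring.
  rewrite E. nra.
Qed.

Definition sh (x : R) := (x - / x) / 2.

Lemma sh_upper j t : 0 < t -> sh (J j t / J (j+1) t) <= (INR j + 1) / t.
Proof.
intros Ht. assert (H := F1 j t Ht). assert (HA := J_pos j t Ht). assert (HB := J_pos (j+1) t Ht).
set (A := J j t) in *. set (B := J (j+1) t) in *.
assert (E : (INR j + 1) / t - sh (A / B) = - (t * (A * A) - 2 * (INR j + 1) * (A * B) - t * (B * B)) / (2 * t * A * B)).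
{ unfold sh. field. repeat split; lra. }
assert (0 <= - (t * (A * A) - 2 * (INR j + 1) * (A * B) - t * (B * B)) / (2 * t * A * B)).
{ apply Rdiv_le_0_compat. lra. repeat apply Rmult_lt_0_compat; lra. }
lra.
Qed.

Lemma sh_lower j t : 0 < t -> INR j / t <= sh (J j t / J (j+1) t).
Proof.
intros Ht. assert (H := F2 j t Ht). assert (HA := J_pos j t Ht). assert (HB := J_pos (j+1) t Ht).
set (A := J j t) in *. set (B := J (j+1) t) in *.
assert (E : sh (A / B) - INR j / t = (t * (A * A) - 2 * INR j * (A * B) - t * (B * B)) / (2 * t * A * B)).
{ unfold sh. field. repeat split; lra. }
assert (0 <= (t * (A * A) - 2 * INR j * (A * B) - t * (B * B)) / (2 * t * A * B)).
{ apply Rdiv_le_0_compat. lra. repeat apply Rmult_lt_0_compat; lra. }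
lra.
Qed.

Lemma ln_sinh x y : 0 < x -> x <= y -> ln y - ln x <= (y - /y)/2 - (x - /x)/2.
Proof.
intros Hx Hxy.
destruct (Req_dec x y) as [E|Hne]. { subst. lra. }
assert (Hlt : x < y) by lra.
set (f := fun z => (z - /z)/2 - ln z).
assert (Hd : forall z, 0 < z -> is_derive f z ((z-1)^2/(2*z^2))).
{ intros z Hz. unfold f. auto_derive. { repeat split; lra. } field. lra. }
destruct (MVT_gen f x y (fun z => (z-1)^2/(2*z^2))) as [c [Hc Heq]].
- intros z Hz. apply Hd. rewrite Rmin_left in Hz; lra.
- intros z Hz. apply continuity_pt_filterlim. apply (ex_derive_continuous (V:=R_NormedModule)).
  eexists. apply Hd. rewrite Rmin_left in Hz; lra.
- rewrite Rmin_left in Hc by lra. rewrite Rmax_right in Hc by lra.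
  assert (0 <= (c-1)^2/(2*c^2) * (y - x)).
  { apply Rmult_le_pos; [|lra]. apply Rdiv_le_0_compat. apply pow2_ge_0.
    assert (0 < c^2) by (apply pow_lt; lra). lra. }
  unfold f in Heq. lra.
Qed.

Lemma ln_cmp x y D : 0 < x -> 0 < y -> 0 <= D -> sh y - sh x <= D -> ln y - ln x <= D.
Proof.
intros Hx Hy HD H. destruct (Rle_lt_dec x y) as [Hle|Hlt].
- assert (L := ln_sinh x y Hx Hle). unfold sh in H. lra.
- assert (L := ln_increasing y x Hy Hlt). lra.
Qed.

Definition bb (t : R) (j : nat) := ln (J j t) - ln (J (j+1) t).

Lemma bb_eq t j : 0 < t -> bb t j = ln (J j t / J (j+1) t).
Proof. intros Ht. unfold bb. rewrite ln_div; [reflexivity| apply J_pos; exact Ht | apply J_pos; exact Ht]. Qed.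

Lemma x_pos t j : 0 < t -> 0 < J j t / J (j+1) t.
Proof. intros Ht. apply Rdiv_lt_0_compat; apply J_pos; exact Ht. Qed.

Lemma bb_up t k : 0 < t -> bb t k <= (INR k + 1) / t.
Proof.
intros Ht. rewrite bb_eq by exact Ht. rewrite <- (Rminus_0_r (ln _)). rewrite <- ln_1.
apply ln_cmp. lra. apply x_pos; exact Ht.
{ apply Rdiv_le_0_compat. assert (0 <= INR k) by apply pos_INR. lra. exact Ht. }
assert (sh 1 = 0) by (unfold sh; field). rewrite H. rewrite Rminus_0_r. apply sh_upper. exact Ht.
Qed.

Lemma bb_diff t j g : 0 < t -> bb t (j+g) - bb t j <= (INR g + 1) / t.
Proof.
intros Ht. rewrite !bb_eq by exact Ht.
apply ln_cmp; try (apply x_pos; exact Ht).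
{ apply Rdiv_le_0_compat. assert (0 <= INR g) by apply pos_INR. lra. exact Ht. }
assert (U := sh_upper (j+g) t Ht). assert (L := sh_lower j t Ht).
rewrite plus_INR in U.
replace ((INR g + 1) / t) with ((INR j + INR g + 1) / t - INR j / t) by (field; lra).
lra.
Qed.

Definition aa (t : R) (z : Z) := ln (J (Z.abs_nat z) t).
Definition BB (t : R) (z : Z) := aa t z - aa t (z + 1).

Lemma absnat_eq z w : Z.abs z = Z.abs w -> Z.abs_nat z = Z.abs_nat w.
Proof. intros H. apply Nat2Z.inj. rewrite !Nat2Z.inj_abs_nat. exact H. Qed.

Lemma BB_pos t u : BB t (Z.of_nat u) = bb t u.
Proof.
unfold BB, aa, bb. rewrite Zabs2Nat.id.
rewrite (absnat_eq (Z.of_nat u + 1) (Z.of_nat (u+1))) by lia. rewrite Zabs2Nat.id. reflexivity.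
Qed.

Lemma BB_neg t u : BB t (- Z.of_nat u - 1) = - bb t u.
Proof.
unfold BB, aa, bb.
rewrite (absnat_eq (- Z.of_nat u - 1) (Z.of_nat (u+1))) by lia.
rewrite (absnat_eq (- Z.of_nat u - 1 + 1) (Z.of_nat u)) by lia.
rewrite !Zabs2Nat.id. ring.
Qed.

Lemma BB_step t z g : 0 < t -> BB t (z + Z.of_nat g) - BB t z <= (INR g + 1) / t.
Proof.
intros Ht.
destruct (Z_le_gt_dec 0 z) as [Hz|Hz].
- set (u := Z.to_nat z).
  replace z with (Z.of_nat u) by (unfold u; lia).
  replace (Z.of_nat u + Z.of_nat g)%Z with (Z.of_nat (u+g)) by lia.
  rewrite !BB_pos. apply bb_diff. exact Ht.
- destruct (Z_lt_le_dec (z + Z.of_nat g) 0) as [Hzg|Hzg].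
  + set (v := Z.to_nat (- (z + Z.of_nat g) - 1)).
    replace (z + Z.of_nat g)%Z with (- Z.of_nat v - 1)%Z by (unfold v; lia).
    replace z with (- Z.of_nat (v+g) - 1)%Z by (unfold v; lia).
    rewrite !BB_neg. assert (H := bb_diff t v g Ht). lra.
  + set (w := Z.to_nat (z + Z.of_nat g)). set (v := Z.to_nat (- z - 1)).
    assert (Hg : g = (w + v + 1)%nat) by (unfold w, v; lia).
    replace (z + Z.of_nat g)%Z with (Z.of_nat w) by (unfold w; lia).
    replace z with (- Z.of_nat v - 1)%Z by (unfold v; lia).
    rewrite BB_pos, BB_neg.
    assert (H1 := bb_up t w Ht). assert (H2 := bb_up t v Ht).
    rewrite Hg, !plus_INR. simpl (INR 1).
    replace ((INR w + INR v + 1 + 1) / t) with ((INR w + 1)/t + (INR v + 1)/t) by (field; lra).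
    lra.
Qed.

Lemma tent t k g d : 0 < t ->
  (aa t (k + Z.of_nat g) - aa t (k + Z.of_nat g + Z.of_nat d)) - (aa t k - aa t (k + Z.of_nat d))
  <= INR d * (INR g + 1) / t.
Proof.
intros Ht. induction d as [|d IH].
- simpl Z.of_nat. rewrite !Z.add_0_r. simpl INR. unfold Rdiv. lra.
- rewrite Nat2Z.inj_succ, S_INR.
  assert (S := BB_step t (k + Z.of_nat d) g Ht).
  unfold BB in S.
  replace (k + Z.of_nat d + Z.of_nat g)%Z with (k + Z.of_nat g + Z.of_nat d)%Z in S by lia.
  replace (k + Z.of_nat g + Z.of_nat d + 1)%Z with (k + Z.of_nat g + Z.succ (Z.of_nat d))%Z in S by lia.
  replace (k + Z.of_nat d + 1)%Z with (k + Z.succ (Z.of_nat d))%Z in S by lia.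
  replace ((INR d + 1) * (INR g + 1) / t) with (INR d * (INR g + 1) / t + (INR g + 1) / t) by (field; lra).
  lra.
Qed.

Lemma pair_ineq t n d : 0 < t ->
  2 * aa t n - aa t (n - Z.of_nat d) - aa t (n + Z.of_nat d) <= (INR d + INR d ^ 2) / t.
Proof.
intros Ht. assert (H := tent t (n - Z.of_nat d) d d Ht).
replace (n - Z.of_nat d + Z.of_nat d)%Z with n in H by lia.
replace ((INR d + INR d ^ 2) / t) with (INR d * (INR d + 1) / t) by (field; lra).
lra.
Qed.

Lemma aa_opp t z : aa t (- z) = aa t z.
Proof. unfold aa. rewrite (absnat_eq (- z) z) by lia. reflexivity. Qed.

Lemma besselI_J z t : besselI z t = J (Z.abs_nat z) t.
Proof. reflexivity. Qed.

Lemma Series_le_gen (a b : nat -> R) : (forall n, a n <= b n) -> ex_series a -> ex_series b -> Series a <= Series b.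
Proof.
intros H Ha Hb.
assert (0 <= Series (fun n => b n - a n)).
{ apply Series_nonneg. intros n; specialize (H n); lra.
  apply (ex_series_minus (V:=R_NormedModule)); assumption. }
rewrite Series_minus in H0 by assumption. lra.
Qed.

Theorem mainTheorem3 (d : nat) (t : R) (p : Z -> R) :
  0 < t ->
  is_pmf p -> symmetric_pmf p -> unimodal_sym_pmf p ->
  integrable_pmf p (fun m => ln (besselI m t / besselI (m - Z.of_nat d)%Z t)) ->
  expect_pmf p (fun m => ln (besselI m t / besselI (m - Z.of_nat d)%Z t))
    <= (INR d + INR d ^ 2) / (2 * t).
Proof.
intros Ht [Hp0 Hp1] Hsym _ Hint.
set (C := (INR d + INR d ^ 2) / (2 * t)).
set (G := fun m => ln (besselI m t / besselI (m - Z.of_nat d)%Z t)).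
assert (HG : forall m, G m = aa t m - aa t (m - Z.of_nat d)).
{ intros m. unfold G, aa. rewrite !besselI_J. apply ln_div; apply J_pos; exact Ht. }
assert (Hterm : forall n, zterm (fun m => p m * G m) n <= C * zterm p n).
{ intros n. destruct n as [|n'].
  - simpl. rewrite HG. assert (H := pair_ineq t 0 d Ht).
    replace (0 - Z.of_nat d)%Z with (- (0 + Z.of_nat d))%Z by lia. rewrite aa_opp.
    replace (0 - Z.of_nat d)%Z with (- (0 + Z.of_nat d))%Z in H by lia. rewrite aa_opp in H.
    assert (aa t 0 - aa t (0 + Z.of_nat d) <= C).
    { unfold C. replace ((INR d + INR d ^ 2) / (2 * t)) with (((INR d + INR d ^ 2) / t) / 2) by (field; lra). lra. }
    specialize (Hp0 0%Z). nra.
  - cbv beta iota delta [zterm]. set (N := Z.of_nat (S n')).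
    rewrite !HG. rewrite <- (Hsym N).
    assert (H := pair_ineq t N d Ht).
    replace (- N - Z.of_nat d)%Z with (- (N + Z.of_nat d))%Z by lia. rewrite !aa_opp.
    assert (aa t N - aa t (N - Z.of_nat d) + (aa t N - aa t (N + Z.of_nat d)) <= 2 * C).
    { unfold C. replace (2 * ((INR d + INR d ^ 2) / (2 * t))) with ((INR d + INR d ^ 2) / t) by (field; lra). lra. }
    specialize (Hp0 N). nra. }
unfold expect_pmf. fold G.
assert (Hex1 : ex_series (zterm p)) by (eexists; exact Hp1).
assert (Hs1 : Series (zterm p) = 1) by (apply is_series_unique; exact Hp1).
assert (Hex2 : ex_series (zterm (fun m => p m * G m))).
{ apply (ex_series_le (V:=R_CompleteNormedModule) _ (zterm (fun m => Rabs (p m * G m)))).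
  - intros n. change (Rabs (zterm (fun m => p m * G m) n) <= zterm (fun m => Rabs (p m * G m)) n).
    destruct n; cbv beta iota delta [zterm]; [apply Rle_refl | apply Rabs_triang].
  - exact Hint. }
apply Rle_trans with (Series (fun n => C * zterm p n)).
- apply Series_le_gen. exact Hterm. exact Hex2. apply (ex_series_scal_l (V:=R_NormedModule)). exact Hex1.
- rewrite Series_scal_l, Hs1. lra.
Qed.
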